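(* For all integers $n,k\ge1$, $$\frac{L_3(k)}{n^{(2k+1)/2}}<\sum_{t=k}^\infty\frac{g_{o,1}(t)}{n^{(2t+1)/2}}<\frac{U_3(k)}{n^{(2k+1)/2}},$$ where $L_3(k)=\left(\frac{19}{10}\alpha\sinh\alpha-\frac{109}{10}\cosh\alpha\sqrt{k+1}-\frac{23}{10\sqrt{k+1}}\right)24^{-(2k+1)/2}$ and $U_3(k)=\left(2\alpha\sinh\alpha+\frac{33}{10\sqrt{k+1}}\right)24^{-(2k+1)/2}$.
   Context: $\alpha=\pi/6$. $(a)_m=a(a+1)\cdots(a+m-1)$ is the rising factorial ($(a)_0=1$); $\binom{x}{m}=x(x-1)\cdots(x-m+1)/m!$ for $m\ge1$, $\binom{x}{0}=1$. For $t\ge2$, $$S_3(t)=\sum_{s=1}^t\frac{(1/2-s)_{s+1}\binom{-3/2}{t-s}}{s}\sum_{u=1}^s\frac{(-1)^u(-s)_u}{(s+u)!\,(2u-1)!}\left(\frac{\pi^2}{36}\right)^u,$$ and $g_{o,1}(t)=-\frac{6}{\pi\sqrt{24}}\frac{(-1)^t}{24^t}\left(\binom{-3/2}{t}+S_3(t)\right)$ for $t\ge2$, $g_{o,1}(1)=-\frac{432+\pi^2}{2304\sqrt6\,\pi}$, $g_{o,1}(0)=-\frac{6}{\pi\sqrt{24}}$. *)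

(* Defs.v *)
From Stdlib Require Import Reals List Arith Factorial.
From Coquelicot Require Import Coquelicot.
Import ListNotations.
Open Scope R_scope.

(* sum_{i=a}^{b} f i  (empty if b < a) *)
Definition sum_from_to (f : nat -> R) (a b : nat) : R :=
  fold_right Rplus 0 (map f (seq a (S b - a))).

Definition rising (a : R) (m : nat) : R :=
  fold_right Rmult 1 (map (fun i => a + INR i) (seq 0 m)).

Definition gbinom (x : R) (m : nat) : R :=
  fold_right Rmult 1 (map (fun i => x - INR i) (seq 0 m)) / INR (fact m).

Definition alpha : R := PI / 6.

Definition S3 (t : nat) : R :=
  sum_from_to (fun s =>
    rising (1/2 - INR s) (S s) * gbinom (-3/2) (t - s) / INR s *
    sum_from_to (fun u =>
      (-1) ^ u * rising (- INR s) u / (INR (fact (s + u)) * INR (fact (2 * u - 1)))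
      * (PI ^ 2 / 36) ^ u) 1 s) 1 t.

Definition g_o1 (t : nat) : R :=
  match t with
  | O => - 6 / (PI * sqrt 24)
  | S O => - (432 + PI ^ 2) / (2304 * sqrt 6 * PI)
  | _ => - 6 / (PI * sqrt 24) * ((-1) ^ t / 24 ^ t) * (gbinom (-3/2) t + S3 t)
  end.

Definition halfpow (x : R) (t : nat) : R := Rpower x ((2 * INR t + 1) / 2).

Definition L3 (k : nat) : R :=
  (19/10 * alpha * sinh alpha - 109/10 * cosh alpha * sqrt (INR k + 1)
   - 23 / (10 * sqrt (INR k + 1))) / halfpow 24 k.

Definition U3 (k : nat) : R :=
  (2 * alpha * sinh alpha + 33 / (10 * sqrt (INR k + 1))) / halfpow 24 k.

(* Main.v *)
Require Import Defs.
From Stdlib Require Import Reals List Arith Lra Lia Factorial.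
From Coquelicot Require Import Coquelicot.
Import ListNotations.
Open Scope R_scope.

Definition prodl (f : nat -> R) (m : nat) : R := fold_right Rmult 1 (map f (seq 0 m)).

Lemma fold_mult_c (l : list R) (c : R) : fold_right Rmult c l = c * fold_right Rmult 1 l.
Proof. induction l as [|a l IH]; simpl; [ring| rewrite IH; ring]. Qed.

Lemma prodl_S f m : prodl f (S m) = prodl f m * f m.
Proof. unfold prodl. rewrite seq_S, map_app, fold_right_app. simpl.
 rewrite fold_mult_c. ring. Qed.

Lemma prodl_shift f m : prodl f (S m) = f 0%nat * prodl (fun i => f (S i)) m.
Proof. unfold prodl. simpl. rewrite <- seq_shift, map_map. reflexivity. Qed.

Lemma prodl_ext f g m : (forall i, f i = g i) -> prodl f m = prodl g m.
Proof. intros H. unfold prodl. rewrite (map_ext f g H). reflexivity. Qed.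

Lemma prodl_bound f c m : (forall i, (i < m)%nat -> 0 <= f i <= c) -> 0 <= prodl f m <= c ^ m.
Proof. induction m as [|m IH]; intros H.
 - unfold prodl; simpl; lra.
 - rewrite prodl_S. assert (H1 := H m (Nat.lt_succ_diag_r m)).
   destruct IH as [IH1 IH2]. intros i Hi; apply H; lia.
   simpl. split. apply Rmult_le_pos; lra.
   rewrite Rmult_comm. apply Rmult_le_compat; lra.
Qed.

Lemma prodl_pos f m : (forall i, (i < m)%nat -> 0 < f i) -> 0 < prodl f m.
Proof. induction m as [|m IH]; intros H.
 - unfold prodl; simpl; lra.
 - rewrite prodl_S. apply Rmult_lt_0_compat. apply IH; intros; apply H; lia. apply H; lia. Qed.

Lemma prodl_neg f m : (-1) ^ m * prodl f m = prodl (fun i => - f i) m.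
Proof. induction m as [|m IH]. unfold prodl; simpl; ring.
 rewrite !prodl_S, <- IH. simpl. ring. Qed.

Definition suml (f : nat -> R) (t : nat) : R := fold_right Rplus 0 (map f (seq 1 t)).

Lemma sum_from_to_1 f t : sum_from_to f 1 t = suml f t.
Proof. unfold sum_from_to, suml. f_equal. f_equal. f_equal. lia. Qed.

Lemma fold_plus_c (l : list R) (c : R) : fold_right Rplus c l = c + fold_right Rplus 0 l.
Proof. induction l as [|a l IH]; simpl; [ring| rewrite IH; ring]. Qed.

Lemma suml_S f t : suml f (S t) = suml f t + f (S t).
Proof. unfold suml. rewrite seq_S, map_app, fold_right_app. simpl.
 rewrite fold_plus_c. ring. Qed.

Lemma suml_le f g t : (forall s, (1 <= s <= t)%nat -> f s <= g s) -> suml f t <= suml g t.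
Proof. induction t as [|t IH]; intros H. unfold suml; simpl; lra.
 rewrite !suml_S. apply Rplus_le_compat. apply IH; intros; apply H; lia. apply H; lia. Qed.

Lemma suml_ext f g t : (forall s, (1 <= s <= t)%nat -> f s = g s) -> suml f t = suml g t.
Proof. induction t as [|t IH]; intros H. reflexivity.
 rewrite !suml_S. rewrite IH, H. reflexivity. lia. intros; apply H; lia. Qed.

Lemma suml_scal c f t : suml (fun s => c * f s) t = c * suml f t.
Proof. induction t as [|t IH]. unfold suml; simpl; ring. rewrite !suml_S, IH; ring. Qed.
Definition Bm (m : nat) : R := (-1) ^ m * gbinom (-3/2) m.

Lemma Bm_S m : Bm (S m) = Bm m * (INR m + 3/2) / (INR m + 1).
Proof. unfold Bm, gbinom. fold (prodl (fun i => -3/2 - INR i) (S m)).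
 fold (prodl (fun i => -3/2 - INR i) m). rewrite prodl_S, fact_simpl, mult_INR, S_INR.
 assert (INR (fact m) <> 0) by apply INR_fact_neq_0. pose proof (pos_INR m).
 simpl. field. lra. Qed.

Lemma Bm_0 : Bm 0 = 1.
Proof. unfold Bm, gbinom; simpl. field. Qed.

Lemma Bm_bound m : 0 < Bm m /\ Bm m ^ 2 <= 2 * INR m + 1.
Proof. induction m as [|m [IH1 IH2]]. rewrite Bm_0; simpl; lra.
 rewrite Bm_S, S_INR. pose proof (pos_INR m). split.
 apply Rdiv_lt_0_compat; [apply Rmult_lt_0_compat|]; lra.
 set (b := Bm m) in *. set (x := INR m) in *.
 replace ((b * (x + 3/2) / (x+1))^2) with (b^2 * ((x+3/2)^2 / (x+1)^2)) by (field; lra).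
 apply Rle_trans with ((2*x+1) * ((x + 3/2)^2/(x+1)^2)).
 apply Rmult_le_compat_r; [|lra]. apply Rle_0_sqr' || (apply Rdiv_le_0_compat'; nra) || idtac.
 all: try (unfold Rdiv; apply Rmult_le_pos; [nra| apply Rlt_le, Rinv_0_lt_compat; nra]).
 apply Rle_trans with ((2*x+1) * ((x + 3/2)^2/(x+1)^2)); [lra|].
 apply (Rmult_le_reg_r ((x+1)^2)). nra. field_simplify; [|lra]. nra.
Qed.

Lemma Bm_le m : Bm m <= sqrt (2 * INR m + 1).
Proof. destruct (Bm_bound m) as [H1 H2]. rewrite <- (sqrt_square (Bm m)) by lra.
 apply sqrt_le_1_alt. simpl in H2. lra. Qed.
Definition Am (s : nat) : R := (-1) ^ s * rising (1/2 - INR s) (S s).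

Lemma Am_0 : Am 0 = 1/2.
Proof. unfold Am, rising; simpl. ring. Qed.

Lemma Am_S s : Am (S s) = (INR s + 1/2) * Am s.
Proof. unfold Am, rising.
 fold (prodl (fun i => 1/2 - INR (S s) + INR i) (S (S s))).
 fold (prodl (fun i => 1/2 - INR s + INR i) (S s)).
 rewrite prodl_shift.
 rewrite (prodl_ext (fun i => 1 / 2 - INR (S s) + INR (S i)) (fun i => 1/2 - INR s + INR i)).
 rewrite S_INR. cbn [pow INR]. field.
 intros i; rewrite !S_INR; ring. Qed.

Definition cm (s : nat) : R := Am s / INR (fact s).

Lemma cm_S s : cm (S s) = cm s * (INR s + 1/2) / (INR s + 1).
Proof. unfold cm. rewrite Am_S, fact_simpl, mult_INR, S_INR.
 assert (INR (fact s) <> 0) by apply INR_fact_neq_0. pose proof (pos_INR s). field. lra. Qed.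

Lemma cm_pos s : 0 < cm s.
Proof. induction s. unfold cm; rewrite Am_0; simpl; lra.
 rewrite cm_S. pose proof (pos_INR s). apply Rdiv_lt_0_compat; [apply Rmult_lt_0_compat|]; lra. Qed.

Lemma cm_sum t : suml (fun s => cm s / INR s) t <= 1 - 2 * cm t.
Proof. induction t. unfold suml, cm; rewrite Am_0; simpl; lra.
 rewrite suml_S. pose proof (cm_pos t). pose proof (pos_INR t).
 assert (cm (S t) / INR (S t) <= 2 * (cm t - cm (S t))).
 { rewrite cm_S, S_INR.
   replace (cm t * (INR t + 1 / 2) / (INR t + 1) / (INR t + 1)) with (cm t * ((INR t + 1/2) / ((INR t + 1) * (INR t + 1)))) by (field; lra).
   replace (2 * (cm t - cm t * (INR t + 1 / 2) / (INR t + 1))) with (cm t * ((INR t + 1) / ((INR t + 1) * (INR t + 1)))) by (field; lra).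
   apply Rmult_le_compat_l; [lra|]. unfold Rdiv. apply Rmult_le_compat_r; [|lra].
   apply Rlt_le, Rinv_0_lt_compat; nra. }
 lra. Qed.

Lemma Am_nonneg s : 0 <= Am s.
Proof. pose proof (cm_pos s). unfold cm in H. pose proof (INR_fact_lt_0 s).
 apply Rlt_le. replace (Am s) with (Am s / INR (fact s) * INR (fact s)) by (field; lra).
 apply Rmult_lt_0_compat; lra. Qed.
Definition xx : R := PI ^ 2 / 36.

Lemma PI_gt3 : 3 < PI.
Proof. pose proof PI2_3_2. lra. Qed.

Lemma xx_bound : 0 <= xx <= 1/2.
Proof. unfold xx. pose proof PI_4. pose proof PI_gt3. split; nra. Qed.

Definition Iterm (s u : nat) : R :=
  (-1) ^ u * rising (- INR s) u / (INR (fact (s + u)) * INR (fact (2 * u - 1)))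
      * (PI ^ 2 / 36) ^ u.

Definition Is (s : nat) : R := sum_from_to (Iterm s) 1 s.

Lemma fact_pow s u : INR (fact s) * INR s ^ u <= INR (fact (s + u)).
Proof. induction u. rewrite Nat.add_0_r; simpl; lra.
 rewrite Nat.add_succ_r, fact_simpl, mult_INR, <- tech_pow_Rmult.
 pose proof (pos_INR s). pose proof (INR_fact_lt_0 s).
 assert (INR s <= INR (S (s + u))) by (apply le_INR; lia).
 assert (0 <= INR s ^ u) by (apply pow_le; lra).
 replace (INR (fact s) * (INR s * INR s ^ u)) with (INR s * (INR (fact s) * INR s ^ u)) by ring.
 apply Rmult_le_compat; try lra. apply Rmult_le_pos; lra. Qed.

Lemma fact_ge1 m : 1 <= INR (fact m).
Proof. change 1 with (INR 1). apply le_INR. pose proof (lt_O_fact m). lia. Qed.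

Lemma Iterm_bound s u : (1 <= u <= s)%nat ->
  0 <= Iterm s u <= / INR (fact s) * (1/2) ^ u.
Proof. intros Hu. unfold Iterm, rising.
 fold (prodl (fun i => - INR s + INR i) u). rewrite prodl_neg.
 destruct (prodl_bound (fun i => - (- INR s + INR i)) (INR s) u) as [P1 P2].
 { intros i Hi. assert (INR i <= INR s) by (apply le_INR; lia). pose proof (pos_INR i). lra. }
 set (P := prodl _ u) in *.
 pose proof (fact_pow s u). pose proof (fact_ge1 (s+u)). pose proof (fact_ge1 (2*u-1)).
 pose proof (fact_ge1 s). pose proof xx_bound. fold xx.
 set (F1 := INR (fact (s+u))) in *. set (F2 := INR (fact (2*u-1))) in *.
 set (F0 := INR (fact s)) in *.
 assert (0 <= xx ^ u <= (1/2)^u) by (split; [apply pow_le; lra| apply pow_incr; lra]).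
 assert (0 <= INR s ^ u) by (apply pow_le, pos_INR).
 split.
 - apply Rmult_le_pos; [|lra]. unfold Rdiv. apply Rmult_le_pos; [lra|].
   apply Rlt_le, Rinv_0_lt_compat; nra.
 - assert (A1 : / (F1 * F2) <= / F1) by (apply Rinv_le_contravar; nra).
   assert (A2 : INR s ^ u * / F1 <= / F0).
   { apply (Rmult_le_reg_l (F0 * F1)); [nra|].
     replace (F0 * F1 * (INR s ^ u * / F1)) with (F0 * INR s ^ u) by (field; lra).
     replace (F0 * F1 * / F0) with F1 by (field; lra). lra. }
   assert (A3 : 0 < / F1) by (apply Rinv_0_lt_compat; lra).
   assert (A4 : 0 < / (F1 * F2)) by (apply Rinv_0_lt_compat; nra).
   assert (A5 : P * / (F1 * F2) <= / F0) by nra.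
   unfold Rdiv. apply Rmult_le_compat; try lra. nra. Qed.

Lemma geom_sum s : suml (fun u => (1/2)^u) s = 1 - (1/2)^s.
Proof. induction s. unfold suml; simpl; lra. rewrite suml_S, IHs. simpl. field. Qed.

Lemma Is_bound s : 0 <= Is s <= / INR (fact s).
Proof. unfold Is. rewrite sum_from_to_1.
 assert (0 <= suml (fun _ => 0) s) by (clear; induction s; [unfold suml; simpl; lra| rewrite suml_S; lra]).
 pose proof (fact_ge1 s).
 split.
 - eapply Rle_trans; [apply H|]. apply suml_le. intros; apply Iterm_bound; lia.
 - eapply Rle_trans. apply suml_le with (g := fun u => / INR (fact s) * (1/2)^u).
   intros; apply Iterm_bound; lia.
   rewrite suml_scal, geom_sum. assert (0 < (1/2)^s) by (apply pow_lt; lra).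
   assert (0 < / INR (fact s)) by (apply Rinv_0_lt_compat; lra). nra. Qed.
Definition Kc : R := 6 / (PI * sqrt 24).

Lemma Kc_pos : 0 < Kc.
Proof. unfold Kc. pose proof PI_gt3. assert (0 < sqrt 24) by (apply sqrt_lt_R0; lra).
 apply Rdiv_lt_0_compat; nra. Qed.

Definition Qt (t : nat) : R := suml (fun s => Am s * Bm (t - s) / INR s * Is s) t.

Lemma S3_eq t : (-1) ^ t * S3 t = Qt t.
Proof. unfold S3, Qt. rewrite sum_from_to_1, <- suml_scal. apply suml_ext.
 intros s Hs. unfold Am, Bm, Is.
 replace ((-1) ^ t) with ((-1) ^ s * (-1) ^ (t - s)) by (rewrite <- pow_add; f_equal; lia).
 unfold Iterm; cbv beta. generalize (rising (1/2 - INR s) (S s)) (gbinom (-3/2) (t-s)). intros X Y. field. apply not_0_INR; lia. Qed.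

Lemma sqrt_mono_nat a b : (a <= b)%nat -> sqrt (2 * INR a + 1) <= sqrt (2 * INR b + 1).
Proof. intros H. apply sqrt_le_1_alt. apply le_INR in H. lra. Qed.

Lemma Qt_bound t : 0 <= Qt t <= sqrt (2 * INR t + 1).
Proof. unfold Qt.
 assert (Z : 0 <= suml (fun _ => 0) t) by (clear; induction t; [unfold suml; simpl; lra| rewrite suml_S; lra]).
 assert (T : forall s, (1 <= s <= t)%nat ->
   0 <= Am s * Bm (t - s) / INR s * Is s <= (cm s / INR s) * sqrt (2 * INR t + 1)).
 { intros s Hs. pose proof (Am_nonneg s). destruct (Bm_bound (t - s)) as [B1 _].
   pose proof (Bm_le (t - s)). pose proof (sqrt_mono_nat (t - s) t ltac:(lia)).
   destruct (Is_bound s) as [I1 I2].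
   assert (0 < INR s) by (apply lt_0_INR; lia).
   pose proof (fact_ge1 s).
   assert (AI : Am s * Is s <= cm s).
   { unfold cm. unfold Rdiv. apply Rmult_le_compat_l; lra. }
   replace (Am s * Bm (t - s) / INR s * Is s) with ((Am s * Is s) / INR s * Bm (t - s)) by (field; lra).
   assert (0 <= Am s * Is s) by (apply Rmult_le_pos; lra).
   assert (0 < / INR s) by (apply Rinv_0_lt_compat; lra).
   unfold Rdiv. split. apply Rmult_le_pos; [apply Rmult_le_pos|]; lra.
   apply Rmult_le_compat; try lra. apply Rmult_le_pos; lra.
   apply Rmult_le_compat_r; lra. }
 split.
 - eapply Rle_trans; [apply Z|]. apply suml_le. intros; apply T; auto.
 - eapply Rle_trans. apply suml_le with (g := fun s => sqrt (2 * INR t + 1) * (cm s / INR s)).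
   intros s Hs. rewrite (Rmult_comm (sqrt _)). apply T; auto.
   rewrite suml_scal. pose proof (cm_sum t). pose proof (cm_pos t).
   pose proof (sqrt_pos (2 * INR t + 1)). nra. Qed.

Lemma g_bound t : (1 <= t)%nat ->
  - (2 * Kc * sqrt (2 * INR t + 1) / 24 ^ t) <= g_o1 t < 0.
Proof. intros Ht. pose proof Kc_pos. pose proof PI_gt3. pose proof PI_4.
 assert (P24 : 0 < 24 ^ t) by (apply pow_lt; lra).
 destruct t as [|[|t]]; [lia| |].
 -
   unfold g_o1. simpl (INR 1).
   assert (s24 : sqrt 24 = 2 * sqrt 6).
   { replace 24 with (2*2*6) by lra. rewrite sqrt_mult by lra. rewrite sqrt_square by lra. ring. }
   assert (s6 : 0 < sqrt 6) by (apply sqrt_lt_R0; lra).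
   assert (s3 : 1 <= sqrt (2 * 1 + 1)) by (apply Rle_trans with (sqrt 1); [rewrite sqrt_1; lra| apply sqrt_le_1_alt; lra]).
   unfold Kc. rewrite s24. simpl (24 ^ 1).
   split.
   + set (r := sqrt (2*1+1)) in *.
     replace (2 * (6 / (PI * (2 * sqrt 6))) * r / (24 * 1)) with (r / (4 * sqrt 6 * PI)) by (field; lra).
     replace (- (432 + PI ^ 2) / (2304 * sqrt 6 * PI)) with (- ((432 + PI^2)/576 / (4 * sqrt 6 * PI))) by (field; nra).
     apply Ropp_le_contravar.
     unfold Rdiv. apply Rmult_le_compat_r. apply Rlt_le, Rinv_0_lt_compat; nra. nra.
   + assert (0 < (432 + PI^2) / (2304 * sqrt 6 * PI)) by (apply Rdiv_lt_0_compat; nra).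
     replace (- (432 + PI ^ 2) / (2304 * sqrt 6 * PI)) with (- ((432 + PI^2) / (2304 * sqrt 6 * PI))) by (field; nra).
     lra.
 - set (T := S (S t)) in *.
   change (g_o1 T) with (-6/(PI*sqrt 24) * ((-1)^T/24^T) * (gbinom (-3/2) T + S3 T)).
   assert (E : -6/(PI*sqrt 24) * ((-1)^T/24^T) * (gbinom (-3/2) T + S3 T) = - (Kc / 24 ^ T) * (Bm T + Qt T)).
   { rewrite <- S3_eq. unfold Bm, Kc. assert (0 < sqrt 24) by (apply sqrt_lt_R0; lra). field. repeat split; try lra. }
   rewrite E. destruct (Bm_bound T) as [B1 _]. pose proof (Bm_le T). pose proof (Qt_bound T).
   assert (0 < Kc / 24 ^ T) by (apply Rdiv_lt_0_compat; lra).
   replace (- (2 * Kc * sqrt (2 * INR T + 1) / 24 ^ T)) with (- (Kc / 24 ^ T) * (2 * sqrt (2 * INR T + 1))) by (field; lra).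
   split; nra.
Qed.
Lemma pow2_ge j : 1 + INR j <= 2 ^ j.
Proof. induction j. simpl; lra. rewrite S_INR. simpl. pose proof (pos_INR j). lra. Qed.

Lemma sqrt_shift k j : sqrt (2 * INR (k + j) + 1) <= sqrt (2 * INR k + 1) * 2 ^ j.
Proof. pose proof (pow2_ge j). pose proof (pos_INR j). pose proof (pos_INR k).
 assert (0 < 2 ^ j) by (apply pow_lt; lra).
 rewrite <- (sqrt_square (2 ^ j)) by lra. rewrite <- sqrt_mult by nra.
 apply sqrt_le_1_alt. rewrite plus_INR. assert (2^j*2^j >= 1 + 2*INR j) by nra. nra. Qed.

Definition Mb (t : nat) : R := 2 * Kc * sqrt (2 * INR t + 1) / 24 ^ t.

Lemma Mb_shift k j : Mb (k + j) <= Mb k * (/ 12) ^ j.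
Proof. unfold Mb. pose proof Kc_pos. rewrite pow_inv, pow_add.
 replace (24 ^ j) with (2 ^ j * 12 ^ j) by (rewrite <- Rpow_mult_distr; f_equal; lra).
 assert (0 < 2 ^ j) by (apply pow_lt; lra). assert (0 < 12 ^ j) by (apply pow_lt; lra).
 assert (0 < 24 ^ k) by (apply pow_lt; lra). pose proof (sqrt_shift k j).
 replace (2 * Kc * sqrt (2 * INR k + 1) / 24 ^ k * / 12 ^ j) with
   (2 * Kc * (sqrt (2 * INR k + 1) * 2 ^ j) / (24 ^ k * (2 ^ j * 12 ^ j))) by (field; lra).
 unfold Rdiv. apply Rmult_le_compat_r. apply Rlt_le, Rinv_0_lt_compat. apply Rmult_lt_0_compat; [lra| apply Rmult_lt_0_compat; lra].
 apply Rmult_le_compat_l; lra. Qed.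

Lemma halfpow_pos x t : 0 < halfpow x t.
Proof. unfold halfpow, Rpower. apply exp_pos. Qed.

Lemma halfpow_mono x k j : 1 <= x -> halfpow x k <= halfpow x (k + j).
Proof. intros H. unfold halfpow. apply Rle_Rpower; auto. rewrite plus_INR. pose proof (pos_INR j). lra. Qed.

Lemma halfpow24 k : halfpow 24 k = 24 ^ k * sqrt 24.
Proof. unfold halfpow. replace ((2 * INR k + 1) / 2) with (INR k + / 2) by field.
 rewrite Rpower_plus, Rpower_pow, Rpower_sqrt by lra. reflexivity. Qed.

Lemma alpha_facts : 0 < alpha /\ alpha * sinh alpha <= 1 /\ 0 < sinh alpha /\ 1 <= cosh alpha.
Proof. unfold alpha. pose proof PI_gt3. pose proof PI_4.
 assert (0 < PI/6) by lra.
 assert (Hs : 0 < sinh (PI/6)) by (rewrite <- sinh_0; apply sinh_lt; lra).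
 assert (He : exp (PI/6) <= 3) by (eapply Rle_trans; [|apply exp_le_3]; apply Rlt_le, exp_increasing; lra).
 pose proof (exp_pos (PI/6)). pose proof (exp_pos (- (PI/6))).
 repeat split; try lra.
 - assert (sinh (PI/6) <= 3/2) by (unfold sinh; lra). nra.
 - unfold cosh. rewrite exp_Ropp. set (e := exp (PI/6)) in *.
   assert (e + / e >= 2).
   { assert (Hi : / e * e = 1) by (apply Rinv_l; lra). assert (0 < / e) by (apply Rinv_0_lt_compat; lra).
     set (ie := / e) in *. assert (0 <= (e - 1) * (e - 1) * ie) by (apply Rmult_le_pos; [pose proof (Rle_0_sqr (e-1)) as Q; unfold Rsqr in Q; exact Q|lra]).
     assert (E : (e-1)*(e-1)*ie = e*(ie*e) - 2*(ie*e) + ie) by ring. rewrite Hi in E. lra. }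
   lra. Qed.

Theorem mainTheorem18 (n k : nat) (hn : (1 <= n)%nat) (hk : (1 <= k)%nat) :
  exists l : R,
    is_series (fun j : nat => g_o1 (k + j) / halfpow (INR n) (k + j)) l /\
    L3 k / halfpow (INR n) k < l /\ l < U3 k / halfpow (INR n) k.
Proof.
 set (a := fun j : nat => g_o1 (k + j) / halfpow (INR n) (k + j)).
 set (H := halfpow (INR n) k).
 assert (Hn : 1 <= INR n) by (change 1 with (INR 1); apply le_INR; lia).
 assert (HH : 0 < H) by apply halfpow_pos.
 set (C := Mb k / H).
 set (b := fun j : nat => C * (/ 12) ^ j).
 assert (Ha : forall j, 0 <= - a j <= b j /\ a j < 0).
 { intros j. unfold a, b, C. destruct (g_bound (k + j) ltac:(lia)) as [G1 G2].
   pose proof (halfpow_mono (INR n) k j Hn). fold H in H0.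
   pose proof (halfpow_pos (INR n) (k + j)).
   set (h := halfpow (INR n) (k + j)) in *. set (G := g_o1 (k + j)) in *.
   pose proof (Mb_shift k j). fold (Mb (k + j)) in G1.
   assert (G / h < 0) by (apply Rdiv_neg_pos; lra) || (unfold Rdiv; assert (0 < / h) by (apply Rinv_0_lt_compat; lra); nra).
   assert (E1 : - (G / h) <= - G / H).
   { unfold Rdiv. rewrite Ropp_mult_distr_l. apply Rmult_le_compat_l; [lra|].
     apply Rinv_le_contravar; lra. }
   assert (- G / H <= Mb k * (/ 12) ^ j / H).
   { unfold Rdiv. apply Rmult_le_compat_r. apply Rlt_le, Rinv_0_lt_compat; lra. lra. }
   replace (Mb k / H * (/ 12) ^ j) with (Mb k * (/ 12) ^ j / H) by (field; lra).
   split; [split|]; lra. }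
 assert (Hb : is_series b (C * / (1 - / 12))).
 { apply (is_series_scal_l C (fun j => (/12) ^ j)). apply is_series_geom.
   rewrite Rabs_pos_eq; lra. }
 assert (Hbe : ex_series b) by (eexists; exact Hb).
 assert (Hae : ex_series a).
 { apply (ex_series_le (K := R_AbsRing) (V := R_CompleteNormedModule) a b); auto. intros j. change (norm (a j)) with (Rabs (a j)).
   destruct (Ha j) as [[? ?] ?]. rewrite Rabs_left by lra. lra. }
 exists (Series a). split; [apply Series_correct; auto|].
 assert (Hna : Series (fun j => - a j) <= C * / (1 - / 12)).
 { rewrite <- (is_series_unique b _ Hb). apply Series_le; auto. intros j; apply Ha. }
 rewrite Series_opp in Hna.
 assert (Hneg : Series a < 0).
 { rewrite Series_incr_1 by auto.
   assert (Series (fun j => 0 * b j) <= Series (fun j => - a (S j))).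
   { apply Series_le. intros j. destruct (Ha (S j)) as [[? ?] ?]. lra.
     apply (ex_series_opp (fun j => a (S j))). apply (proj1 (ex_series_incr_1 (V := R_NormedModule) a)); auto. }
   rewrite Series_scal_l, Series_opp in H0. destruct (Ha 0%nat) as [_ ?]. lra. }
 destruct alpha_facts as [A1 [A2 [A3 A4]]].
 assert (r1 : 1 <= sqrt (INR k + 1)).
 { apply Rle_trans with (sqrt 1); [rewrite sqrt_1; lra| apply sqrt_le_1_alt; pose proof (pos_INR k); lra]. }
 assert (s24 : 0 < sqrt 24) by (apply sqrt_lt_R0; lra).
 assert (P24 : 0 < 24 ^ k) by (apply pow_lt; lra).
 split.
 -
   assert (L3 k < - (C * / (1 - / 12)) * H).
   { unfold C, Mb, L3, Kc. rewrite halfpow24.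
     set (r := sqrt (INR k + 1)) in *.
     assert (sk : sqrt (2 * INR k + 1) <= 2 * r).
     { unfold r. rewrite <- (sqrt_square 2) at 2 by lra. rewrite <- sqrt_mult by (pose proof (pos_INR k); lra).
       apply sqrt_le_1_alt. pose proof (pos_INR k). lra. }
     set (sq := sqrt (2 * INR k + 1)) in *. pose proof PI_gt3.
     assert (0 <= sq) by apply sqrt_pos.
     replace (- (2 * (6 / (PI * sqrt 24)) * sq / 24 ^ k / H * / (1 - / 12)) * H)
       with (- (144 / 11 * sq / PI) / (24 ^ k * sqrt 24)) by (field; repeat split; lra).
     unfold Rdiv at 1. unfold Rdiv at 3. apply Rmult_lt_compat_r.
     apply Rinv_0_lt_compat; nra.
     assert (sq / PI <= 2 * r / 3).
     { apply (Rmult_le_reg_r PI); [lra|]. field_simplify; try lra. nra. }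
     assert (0 < 23 / (10 * r)) by (apply Rdiv_lt_0_compat; lra).
     assert (cosh alpha * r >= r) by nra.
     assert (144 / 11 * sq / PI = 144/11 * (sq / PI)) by (field; lra).
     lra. }
   unfold Rdiv at 1. apply Rlt_le_trans with (- (C * / (1 - / 12)) * H * / H).
   apply Rmult_lt_compat_r; [apply Rinv_0_lt_compat; lra| auto].
   replace (- (C * / (1 - / 12)) * H * / H) with (- (C * / (1 - / 12))) by (field; lra). lra.
 -
   assert (0 < U3 k).
   { unfold U3. apply Rdiv_lt_0_compat; [|apply halfpow_pos].
     assert (0 < 33 / (10 * sqrt (INR k + 1))) by (apply Rdiv_lt_0_compat; lra). nra. }
   assert (0 < U3 k / H) by (apply Rdiv_lt_0_compat; lra). lra.
Qed.
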